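(* Let $N\ge1$ and let $x=(x_1,\dots,x_{2N})\in(\mathbb{R}_{>0})^{2N}$ satisfy the highest weight condition. Then Algorithm I and Algorithm II, both started from $x^{(1)}=x$, stop after the same number $u$ of steps and produce the same sequence of pairs $(\mu^{(i)},\nu^{(i)})_{1\le i\le u}$.
   Context: Highest weight condition: a sequence $x_1,\dots,x_{2n}$ of nonnegative reals satisfies it if $\sum_{i=1}^k(x_{2i-1}-x_{2i})\ge0$ for all $1\le k\le n$. Algorithm I. Set $N^{(1)}=N$, $x^{(1)}=x$. Given $x^{(i)}=(x^{(i)}_1,\dots,x^{(i)}_{2N^{(i)}})$ of positive reals satisfying the highest weight condition: let $\mu^{(i)}=\min_j x^{(i)}_j$ and $y^{(i)}_j=x^{(i)}_j-\mu^{(i)}$. In the (linear, non-cyclic) array $y^{(i)}_1,\dots,y^{(i)}_{2N^{(i)}}$ consider the maximal runs of consecutive zeros (a lone zero counts as a run); say there are $k^{(i)}$ runs with lengths $n^{(i)}_1,\dots,n^{(i)}_{k^{(i)}}$. Let $N^{(i+1)}=N^{(i)}-\sum_{j}\lceil n^{(i)}_j/2\rceil$ and $\nu^{(i)}=N^{(i)}-N^{(i+1)}$. If $N^{(i+1)}=0$, stop and set $u=i$. Otherwise form $x^{(i+1)}$ from $y^{(i)}$: (a) if a run of zeros is at the left end, delete it; (b) for every run of zeros lying between positive entries $a,b$, delete the zeros if the run length is even, and if odd delete the zeros and also replace $a,b$ by the single entry $a+b$; (c) if a run of zeros is at the right end, preceded by a positive entry $a$, delete the zeros, and if its length is odd also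 delete $a$ and add $a$ to the first entry of the resulting array. Repeat with $x^{(i+1)}$. Algorithm II is identical to Algorithm I except that step (c) is replaced by: (c') if a run of zeros is at the right end, preceded by a positive entry $a$, delete the zeros, and if its length is odd also delete $a$ (without adding it anywhere). *)

(* Defs.v *)
(* the statement is over an arbitrary real field R
   (in particular it covers the real numbers). *)
From HB Require Import structures.
From mathcomp Require Import all_boot all_order all_algebra.
Set Implicit Arguments. Unset Strict Implicit. Unset Printing Implicit Defensive.
Import Order.TTheory GRing.Theory Num.Theory.
Local Open Scope ring_scope.

Section Alg.
Variable R : realFieldType.

(* highest weight condition for x_1..x_{2n} (0-indexed here):
   for all 1 <= k <= n, sum_{i<k} (x_{2i} - x_{2i+1}) >= 0 *)
Definition highest_weight (x : seq R) : Prop :=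
  forall k : nat, (1 <= k <= (size x)./2)%N ->
    0 <= \sum_(i < k) (x`_(2 * i) - x`_(2 * i).+1).

Definition seqmin (x : seq R) : R := foldr Num.min (head 0 x) x.

(* decomposition of an array into positive entries (inl a) and maximal
   runs of zeros (inr n, n = length of the run) *)
Fixpoint group_runs (y : seq R) : seq (R + nat) :=
  match y with
  | [::] => [::]
  | a :: t =>
      let g := group_runs t in
      if a == 0 then
        match g with
        | inr n :: g' => inr n.+1 :: g'
        | _ => inr 1%N :: g
        end
      else inl a :: g
  end.

Definition zero_runs (g : seq (R + nat)) : seq nat :=
  pmap (fun t => match t with inr n => Some n | inl _ => None end) g.

Definition run_nu (g : seq (R + nat)) : nat :=
  sumn [seq uphalf n | n <- zero_runs g].

(* step (b): scanning from a positive entry acc; interior odd runs merge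
   neighbours, even runs are just deleted. Returns the resulting array and
   the length of the trailing run of zeros (if any). *)
Fixpoint merge_runs (acc : R) (g : seq (R + nat)) : seq R * option nat :=
  match g with
  | [::] => ([:: acc], None)
  | [:: inr n] => ([:: acc], Some n)
  | inr n :: inl b :: g' =>
      if odd n then merge_runs (acc + b) g'
      else let (s, t) := merge_runs b g' in (acc :: s, t)
  | inr _ :: inr _ :: _ => ([:: acc], None) (* cannot occur after grouping *)
  | inl b :: g' => let (s, t) := merge_runs b g' in (acc :: s, t)
  end.

(* form x^{(i+1)} from y^{(i)}; addback = true for Algorithm I (step (c)),
   false for Algorithm II (step (c')) *)
Definition next_array (addback : bool) (y : seq R) : seq R :=
  let g := group_runs y in
  let g1 := match g with inr _ :: g' => g' | _ => g end in
  match g1 with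
  | inl a :: rest =>
      let (s, t) := merge_runs a rest in
      match t with
      | Some n =>
          if odd n then
            let s0 := belast (head 0 s) (behead s) in
            let l := last 0 s in
            if addback then
              match s0 with
              | h :: s' => (h + l) :: s'
              | [::] => [::]
              end
            else s0
          else s
      | None => s
      end
  | _ => [::]
  end.

(* alg_run addback N x L : starting from N^{(i)} = N, x^{(i)} = x, the
   algorithm stops, and L is the sequence of pairs (mu^{(j)}, nu^{(j)})
   for j = i, ..., u. *)
Inductive alg_run (addback : bool) : nat -> seq R -> seq (R * nat) -> Prop :=
  | alg_stop N x :
      let mu := seqmin x in
      let y := [seq a - mu | a <- x] in
      let nu := run_nu (group_runs y) in
      (N - nu)%N = 0%N ->
      alg_run addback N x [:: (mu, nu)]
  | alg_continue N x L :
      let mu := seqmin x in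
      let y := [seq a - mu | a <- x] in
      let nu := run_nu (group_runs y) in
      (N - nu)%N <> 0%N ->
      alg_run addback (N - nu)%N (next_array addback y) L ->
      alg_run addback N x ((mu, nu) :: L).

End Alg.

Definition algorithm_I_run (R : realFieldType) := @alg_run R true.
Definition algorithm_II_run (R : realFieldType) := @alg_run R false.

(* Main.v *)
Require Import Defs.
From HB Require Import structures.
From mathcomp Require Import all_boot all_order all_algebra.
From mathcomp Require Import zify ring lra.
Set Implicit Arguments. Unset Strict Implicit. Unset Printing Implicit Defensive.
Import Order.TTheory GRing.Theory Num.Theory.
Local Open Scope ring_scope.

Fixpoint pp {R : realFieldType} (B : R) (sg : bool) (s : seq R) : Prop :=
  if s is a :: s' then
    let B' := (if sg then B + a else B - a) in 0 <= B' /\ pp B' (~~ sg) s'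
  else True.

Fixpoint ppe {R : realFieldType} (B : R) (s : seq R) : Prop :=
  match s with
  | a :: b :: s' => 0 <= B + a - b /\ ppe (B + a - b) s'
  | _ => True
  end.

Fixpoint flat {R : realFieldType} (g : seq (R + nat)) : seq R :=
  match g with
  | [::] => [::]
  | inl a :: g' => a :: flat g'
  | inr n :: g' => nseq n 0 ++ flat g'
  end.

Fixpoint wf {R : realFieldType} (g : seq (R + nat)) : Prop :=
  match g with
  | [::] => True
  | inl a :: g' => 0 < a /\ wf g'
  | inr n :: g' => (match g' with inr _ :: _ => False | _ => True end) /\ wf g'
  end.

Definition addfirst {R : realFieldType} (d : R) (s : seq R) :=
  if s is c :: s' then (c + d) :: s' else [::].

Lemma pp_cat {R : realFieldType} (l1 l2 : seq R) B sg : pp B sg (l1 ++ l2) -> pp B sg l1.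
Proof. by elim: l1 B sg => //= a l IH B sg [h1 /IH]. Qed.

Lemma pp_nseq {R : realFieldType} n (l : seq R) B sg : 0 <= B ->
  pp B sg (nseq n 0 ++ l) <-> pp B (if odd n then ~~ sg else sg) l.
Proof.
move=> hB; elim: n sg => [|n IH] sg //=.
have -> : (if sg then B + 0 else B - 0) = B by case: sg; rewrite ?addr0 ?subr0.
rewrite IH; case: sg; case: (odd n) => /=; split => [[]|] //.
Qed.

Lemma ppe_pp {R : realFieldType} (s : seq R) B : 0 <= B -> all (fun a => 0 <= a) s -> ppe B s -> pp B true s.
Proof.
move: {2}(size s) (leqnn (size s)) => n; elim: n s B => [|n IH] [|a [|b s]] B //= hn hB;
  try by rewrite andbT => ha _; split => //; rewrite addr_ge0.
case/and3P=> ha hb hs [h1 h2]; split; first by rewrite addr_ge0.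
split=> //. apply: IH => //; by rewrite -ltnS ltnW.
Qed.

Lemma pp_ppe {R : realFieldType} (s : seq R) B : pp B true s -> ppe B s.
Proof.
move: {2}(size s) (leqnn (size s)) => n; elim: n s B => [|n IH] [|a [|b s]] B //= hn [_ [h1 h2]].
split => //; apply: IH => //. by rewrite -ltnS ltnW.
Qed.

Lemma ppe_shift {R : realFieldType} (s : seq R) B mu : ppe B [seq a - mu | a <- s] <-> ppe B s.
Proof.
move: {2}(size s) (leqnn (size s)) => n; elim: n s B => [|n IH] [|a [|b s]] B //= hn.
have -> : B + (a - mu) - (b - mu) = B + a - b by ring.
rewrite IH //. by rewrite -ltnS ltnW.
Qed.

Lemma hw_ppe {R : realFieldType} (s : seq R) B :
  (forall k, (1 <= k <= (size s)./2)%N -> 0 <= B + \sum_(i < k) (s`_(2*i) - s`_(2*i).+1)) -> ppe B s.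
Proof.
move: {2}(size s) (leqnn (size s)) => n; elim: n s B => [|n IH] [|a [|b s]] B //= hn H.
have h1 : 0 <= B + a - b by have := H 1%N; rewrite big_ord1 /= addrA; apply.
split => //; apply: IH; first by rewrite -ltnS ltnW.
move=> k /andP[k1 k2]; have := H k.+1; rewrite big_ord_recl /=.
have -> : \sum_(i < k) ((a :: b :: s)`_(2 * (lift ord0 i)) - (a :: b :: s)`_(2 * (lift ord0 i)).+1)
   = \sum_(i < k) (s`_(2*i) - s`_(2*i).+1).
  by apply: eq_bigr => i _; rewrite lift0 mulnS add2n.
by rewrite !addrA; apply.
Qed.

Lemma flat_group {R : realFieldType} (y : seq R) : flat (group_runs y) = y.
Proof.
elim: y => //= a t IH; case: eqP => [->|_] /=; last by rewrite IH.
by move: IH; case: (group_runs t) => [|[b|m] g] /= <-.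
Qed.

Lemma wf_group {R : realFieldType} (y : seq R) : all (fun a => 0 <= a) y -> wf (group_runs y).
Proof.
elim: y => //= a t IH /andP[ha ht]; have := IH ht.
case: eqP => [_|/eqP ha0] /=; last by move=> h; rewrite lt_def ha0 ha.
by case: (group_runs t) => [|[b|m] g] //=.
Qed.

Lemma nu_pos {R : realFieldType} (y : seq R) : 0 \in y -> (0 < run_nu (group_runs y))%N.
Proof.
rewrite /run_nu; elim: y => //= a t IH; rewrite in_cons => h.
case: eqP => [_|/eqP ha0].
  by case: (group_runs t) => [|[b|m] g] //=.
by apply: IH; move: h; rewrite eq_sym (negbTE ha0).
Qed.

Lemma foldr_min_le {R : realFieldType} (z : R) s : (foldr Num.min z s <= z) /\ forall a, a \in s -> foldr Num.min z s <= a.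
Proof.
elim: s => [|b s [IH1 IH2]] /=; first by split.
split; first by rewrite ge_min IH1 orbT.
move=> a; rewrite in_cons => /orP[/eqP->|/IH2 h]; first by rewrite ge_min lexx.
by rewrite ge_min h orbT.
Qed.

Lemma foldr_min_mem {R : realFieldType} (z : R) s : foldr Num.min z s \in z :: s.
Proof.
elim: s => [|b s IH] /=; first by rewrite mem_head.
rewrite /Num.min; case: ifP => _; first by rewrite !in_cons eqxx orbT.
move: IH; rewrite !in_cons => /orP[->//|h]; by rewrite h !orbT.
Qed.

Definition tl (t : option nat) := if t is Some n then n else 0%N.

Lemma uphalf_odd m : odd m -> (2 * uphalf m = m.+1)%N.
Proof.
move=> h; have := odd_double_half m; rewrite uphalf_half h -mul2n /=; lia.
Qed.

Lemma uphalf_even m : ~~ odd m -> (2 * uphalf m = m)%N.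
Proof.
move=> h; have := odd_double_half m; rewrite uphalf_half (negbTE h) -mul2n /=; lia.
Qed.

Lemma size_flat_inr {R : realFieldType} m (g : seq (R + nat)) : size (flat (inr m :: g)) = (m + size (flat g))%N.
Proof. by rewrite /= size_cat size_nseq. Qed.

Lemma merge_props {R : realFieldType} n (g : seq (R+nat)) acc : (size g <= n)%N -> wf g ->
  let p := merge_runs acc g in
  [/\ (0 <= acc -> all (fun a => 0 <= a) p.1),
      p.1 != [::],
      (forall B sg, pp B sg (acc :: flat g) -> pp B sg p.1),
      (size (acc :: flat g) + 2 * uphalf (tl p.2) = size p.1 + tl p.2 + 2 * run_nu g)%N &
      (forall d, merge_runs (acc + d) g = (addfirst d p.1, p.2))].
Proof.
elim: n g acc => [|n IH] [|[b|m] g] acc //= hn.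
- by move=> _; split => //= [->].
- by move=> _; split => //= [->].
- case=> hb hg; have := IH g b hn hg; case E: (merge_runs b g) => [s t] /= [A1 A2 A3 A4 A5].
  split => //=.
  + by move=> ha; rewrite ha A1 // ltW.
  + by move=> B sg [h1 h2]; split => //; apply: A3.
  + rewrite /run_nu /= -/(run_nu g); lia.
- case: g hn => [|[b|m'] g] hn [hw1 hw2].
  + split => //= [->//|B sg [h1 h2]|]; first by split.
    rewrite /run_nu /= size_cat size_nseq /=; lia.
  + case: hw2 => hb hg.
    case: ifP => hodd.
    * have := IH g (acc + b) (ltnW hn) hg; case E: (merge_runs (acc + b) g) => [s t] /= [A1 A2 A3 A4 A5].
      split => //.
      -- by move=> ha; apply: A1; rewrite addr_ge0 // ltW.
      -- move=> B sg [h1]; rewrite pp_nseq // hodd /= negbK => -[h2 h3]; apply: A3 => /=.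
         by case: sg h1 h2 h3 => /=; rewrite ?opprD !addrA.
      -- rewrite /run_nu /= size_cat size_nseq /= -/(run_nu g); have := uphalf_odd hodd.
         move: A4; rewrite /=; lia.
      -- by move=> d; rewrite addrAC A5.
    * have := IH g b (ltnW hn) hg; case E: (merge_runs b g) => [s t] /= [A1 A2 A3 A4 A5].
      split => //=.
      -- by move=> ha; rewrite ha A1 // ltW.
      -- move=> B sg [h1]; rewrite pp_nseq // hodd => h2; split => //; exact: A3.
      -- rewrite /run_nu /= size_cat size_nseq /= -/(run_nu g); have := uphalf_even (negbT hodd).
         move: A4; rewrite /=; lia.
  + by case: hw1.
Qed.

Definition fin {R : realFieldType} (addback : bool) (st : seq R * option nat) : seq R :=
  let (s, t) := st in
      match t with
      | Some n =>
          if odd n then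
            let s0 := belast (head 0 s) (behead s) in
            let l := last 0 s in
            if addback then
              match s0 with
              | h :: s' => (h + l) :: s'
              | [::] => [::]
              end
            else s0
          else s
      | None => s
      end.

Lemma next_fin {R : realFieldType} ab (y : seq R) : next_array ab y =
  match (match group_runs y with inr _ :: g' => g' | g => g end) with
  | inl a :: rest => fin ab (merge_runs a rest) | _ => [::] end.
Proof. rewrite /next_array /fin; case: (group_runs y) => [|[a|n] [|[b|m] g]] //=; by case: (merge_runs _ _). Qed.

Lemma addfirst0 {R : realFieldType} (s : seq R) : addfirst 0 s = s.
Proof. by case: s => //= c s; rewrite addr0. Qed.

Lemma fin_II {R : realFieldType} (s : seq R) t : s != [::] -> pp 0 true s ->
  pp 0 true (fin false (s, t)) /\ (size (fin false (s, t)) + 2 * uphalf (tl t) = size s + tl t)%N.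
Proof.
case: s => // h s1 _ hp; case: t => [m|] /=; last by rewrite addn0.
case: ifP => hodd /=.
  split; first by move: hp; rewrite lastI -cats1; apply: pp_cat.
  by rewrite size_belast (uphalf_odd hodd); lia.
by rewrite (uphalf_even (negbT hodd)).
Qed.

Lemma fin_rel {R : realFieldType} (s : seq R) t d : s != [::] -> all (fun a => 0 <= a) s -> 0 <= d ->
  exists d', 0 <= d' /\ fin true (addfirst d s, t) = addfirst d' (fin false (s, t)).
Proof.
case: s => // h s1 _ hs hd; case: t => [m|] /=; last by exists d.
case: ifP => hodd /=; last by exists d.
case: s1 hs => [|e s2] hs /=; first by exists 0.
exists (d + last e s2); split; last by rewrite addrA.
rewrite addr_ge0 //; move/allP: hs; apply; by rewrite in_cons mem_last orbT.
Qed.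

Lemma stepII_inl {R : realFieldType} (a : R) rest : wf (inl a :: rest) -> pp 0 true (a :: flat rest) ->
  pp 0 true (fin false (merge_runs a rest)) /\
  size (a :: flat rest) = (size (fin false (merge_runs a rest)) + 2 * run_nu rest)%N.
Proof.
case=> ha hr hp.
have [A1 A2 A3 A4 _] := merge_props a (leqnn (size rest)) hr.
move: A1 A2 A3 A4; case: (merge_runs a rest) => s t /= A1 A2 A3 A4.
have [F1 F2] := fin_II t A2 (A3 0 true hp).
split => //; move: A4 F2 => /=; lia.
Qed.

Lemma stepII {R : realFieldType} (y : seq R) : all (fun a => 0 <= a) y -> pp 0 true y -> ~~ odd (size y) ->
  pp 0 true (next_array false y) /\ size y = (size (next_array false y) + 2 * run_nu (group_runs y))%N.
Proof.
move=> hy hp hs; rewrite next_fin.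
have hw := wf_group hy; have hf := flat_group y.
move: hw hf; case: (group_runs y) => [|[a|m] g] /=.
- by move=> _ <-.
- move=> hw hf; rewrite -hf in hp *; exact: stepII_inl.
- case: g => [|[b|m'] g] [hw1 hw2] hf.
  + move: hs; rewrite -hf /= cats0 size_nseq /run_nu /= => hs; split => //.
    have := uphalf_even hs; simpl; lia.
  + move: hp; rewrite -hf pp_nseq // => hp.
    case: ifP hp => hodd hp.
      by case: hw2 => hb _; move: hp => /= [h _]; move: h; rewrite sub0r oppr_ge0 leNgt hb.
    have [S1 S2] := stepII_inl hw2 hp; split => //.
    rewrite /= size_cat size_nseq S2 /run_nu /= -/(run_nu g).
    by have := uphalf_even (negbT hodd); lia.
  + by case: hw1.
Qed.

Lemma nextI_inl {R : realFieldType} (a d : R) rest : wf (inl a :: rest) -> 0 <= d ->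
  exists d', 0 <= d' /\ fin true (merge_runs (a + d) rest) = addfirst d' (fin false (merge_runs a rest)).
Proof.
case=> ha hr hd.
have [A1 A2 _ _ A5] := merge_props a (leqnn (size rest)) hr.
rewrite A5; move: A1 A2; case: (merge_runs a rest) => s t /= A1 A2.
exact: fin_rel (A1 (ltW ha)) hd.
Qed.

Lemma nextTF {R : realFieldType} (y : seq R) : all (fun a => 0 <= a) y ->
  exists d', 0 <= d' /\ next_array true y = addfirst d' (next_array false y).
Proof.
move=> hy; rewrite !next_fin; have := wf_group hy.
case: (group_runs y) => [|[a|m] g] /=.
- by exists 0.
- move=> hw; have [d' [h1 h2]] := nextI_inl hw (lexx 0); exists d'; by rewrite -h2 addr0.
- case: g => [|[b|m'] g] [hw1 hw2] /=; try by exists 0.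
  have [d' [h1 h2]] := nextI_inl hw2 (lexx 0); exists d'; by rewrite -h2 addr0.
Qed.

Lemma stepI {R : realFieldType} (y : seq R) d : all (fun a => 0 <= a) y -> pp 0 true y -> ~~ odd (size y) -> 0 <= d ->
  exists d', 0 <= d' /\ next_array true (addfirst d y) = addfirst d' (next_array false y)
    /\ run_nu (group_runs (addfirst d y)) = run_nu (group_runs y).
Proof.
case: y => [|c t] hy hp hs hd; first by exists 0.
have [->|hd0] := eqVneq d 0.
  rewrite addfirst0; have [d' [h1 h2]] := nextTF hy; by exists d'.
have hd' : 0 < d by rewrite lt_def hd0 hd.
move: (hy) => /andP[hc ht].
have [hc0|hc0] := eqVneq c 0.
- subst c; rewrite /= add0r !next_fin /= eqxx (negbTE hd0).
  have hwt := wf_group ht; have hft := flat_group t.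
  move: hwt hft; case: (group_runs t) => [|[b|m] g] /=.
  + by move=> _ ht0; move: hs; rewrite -ht0.
  + case=> hb _ hft; move: hp; rewrite -hft /= !addr0 => -[_ [h _]]; move: h.
    by rewrite sub0r oppr_ge0 leNgt hb.
  + case: g => [|[b|m'] g] [hw1 hw2] hft.
    * have hm : odd m by move: hs; rewrite -hft /= cats0 size_nseq /= negbK.
      exists 0; split => //; rewrite /= hm; split => //.
      rewrite /run_nu /=; have := uphalf_odd hm; have : (2 * uphalf m.+1 = m.+1)%N by apply: uphalf_even; rewrite /= hm.
      lia.
    * have hm : odd m.
        have : pp 0 true (nseq m.+1 0 ++ flat (inl b :: g)) by move: hp; rewrite -hft.
        rewrite pp_nseq // /=.
        case hm: (odd m) => //= -[h _]; move: h; rewrite sub0r oppr_ge0 leNgt; by case: hw2 => ->.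
      rewrite hm addrC; have [d' [h1 h2]] := nextI_inl hw2 hd.
      exists d'; split => //; split => //.
      rewrite /run_nu /= -/(run_nu g).
      have := uphalf_odd hm; have : (2 * uphalf m.+1 = m.+1)%N by apply: uphalf_even; rewrite /= hm.
      lia.
    * by case: hw1.
- have hcp : 0 < c by rewrite lt_def hc0 hc.
  have hcd : (c + d == 0) = false by apply/negbTE; rewrite gt_eqF // ltr_wpDr // ltW.
  rewrite /= !next_fin /= hcd (negbTE hc0).
  have hw : wf (inl c :: group_runs t) by split => //; apply: wf_group.
  have [d' [h1 h2]] := nextI_inl hw hd; by exists d'.
Qed.

Lemma seqmin_le {R : realFieldType} (x : seq R) a : a \in x -> seqmin x <= a.
Proof. rewrite /seqmin; have [_ h] := foldr_min_le (head 0 x) x; exact: h. Qed.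

Lemma seqmin_mem {R : realFieldType} (x : seq R) : x != [::] -> seqmin x \in x.
Proof.
case: x => // c t _; rewrite /seqmin; have := foldr_min_mem (head 0 (c :: t)) (c :: t).
by rewrite /= !in_cons orbA orbb.
Qed.

Lemma seqmin_addfirst {R : realFieldType} (x : seq R) d : ppe 0 x -> (2 <= size x)%N -> 0 <= d ->
  seqmin (addfirst d x) = seqmin x.
Proof.
case: x => [|c [|b t]] //= [hbc _] _ hd.
rewrite add0r subr_ge0 in hbc.
set xI := (c + d) :: b :: t; set xII := c :: b :: t.
have mI := seqmin_mem (x := xI) isT; have mII := seqmin_mem (x := xII) isT.
apply/le_anti/andP; split.
- move: mII; rewrite in_cons => /orP[/eqP ->|h].
    by apply: le_trans hbc; apply: seqmin_le; rewrite !in_cons eqxx !orbT.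
  by apply: seqmin_le; rewrite in_cons h orbT.
- move: mI; rewrite in_cons => /orP[/eqP ->|h].
    apply: le_trans (seqmin_le (x := xII) (mem_head _ _)) _; by rewrite lerDl.
  by apply: seqmin_le; rewrite in_cons h orbT.
Qed.

Lemma main_ind {R : realFieldType} N : forall (x : seq R) d, size x = (2 * N)%N -> ppe 0 x -> 0 <= d ->
  exists L, alg_run true N (addfirst d x) L /\ alg_run false N x L.
Proof.
elim/ltn_ind: N => N IH x d hs hp hd.
have hy : all (fun a => 0 <= a) [seq (a - seqmin x)%R | a <- x].
  by apply/allP => z /mapP [a ha ->]; rewrite subr_ge0 seqmin_le.
have hpy : pp 0 true [seq (a - seqmin x)%R | a <- x].
  by apply: ppe_pp (lexx 0) hy _; apply/ppe_shift.
have hsy : ~~ odd (size [seq (a - seqmin x)%R | a <- x]) by rewrite size_map hs oddM.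
have [d' [hd' [eN eNu]]] := stepI hy hpy hsy hd.
have [P1 P2] := stepII hy hpy hsy.
have emu : seqmin (addfirst d x) = seqmin x.
  case: (leqP 2 (size x)) => h; first exact: seqmin_addfirst.
  by case: x hs h {hy hpy hsy eN eNu P1 P2 hp} => [|c [|b t]] //= hs; lia.
have eyI : [seq (a - seqmin (addfirst d x))%R | a <- addfirst d x] = addfirst d [seq (a - seqmin x)%R | a <- x].
  by rewrite emu; case: (x) => //= c t; rewrite addrAC.
have eNuI : run_nu (group_runs [seq (a - seqmin (addfirst d x))%R | a <- addfirst d x])
    = run_nu (group_runs [seq (a - seqmin x)%R | a <- x]) by rewrite eyI eNu.
case hN: (N - run_nu (group_runs [seq (a - seqmin x)%R | a <- x]) == 0)%N.
- exists [:: (seqmin x, run_nu (group_runs [seq (a - seqmin x)%R | a <- x]))]; split.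
  + rewrite -eNuI -emu; apply: alg_stop; rewrite eNuI; exact/eqP.
  + apply: alg_stop; exact/eqP.
- have hN0 : (0 < N)%N by case: (N) hN.
  have hx0 : x != [::] by case: (x) hs => //=; lia.
  have hnu : (0 < run_nu (group_runs [seq (a - seqmin x)%R | a <- x]))%N.
    apply: nu_pos; apply/mapP; exists (seqmin x); first exact: seqmin_mem.
    by rewrite subrr.
  have hs' : size (next_array false [seq (a - seqmin x)%R | a <- x])
      = (2 * (N - run_nu (group_runs [seq (a - seqmin x)%R | a <- x])))%N.
    by move: P2; rewrite size_map hs; lia.
  have hlt : (N - run_nu (group_runs [seq (a - seqmin x)%R | a <- x]) < N)%N by lia.
  have [L' [L1 L2]] := IH _ hlt _ _ hs' (pp_ppe P1) hd'.
  exists ((seqmin x, run_nu (group_runs [seq (a - seqmin x)%R | a <- x])) :: L'); split.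
  + rewrite -eNuI -emu; apply: alg_continue; rewrite eNuI; first exact/eqP/negbT.
    by rewrite eyI eN.
  + apply: alg_continue; first exact/eqP/negbT.
    exact: L2.
Qed.

Unset Implicit Arguments.

Theorem mainTheorem8 (R : realFieldType) (N : nat) (x : seq R) :
  (1 <= N)%N ->
  size x = (2 * N)%N ->
  all (fun a => 0 < a) x ->
  highest_weight x ->
  exists L : seq (R * nat),
    algorithm_I_run N x L /\ algorithm_II_run N x L.
Proof.
move=> _ hs _ hw.
have hp : ppe 0 x by apply: hw_ppe => k hk; rewrite add0r; exact: hw.
have [L [L1 L2]] := main_ind hs hp (lexx 0).
by exists L; split => //; rewrite addfirst0 in L1.
Qed.
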